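(* Let $M\ge1$ and for $m=1,\dots,M$ let $\boldsymbol{W}_m\in\mathbb{R}^{k_m\times d}$, $\boldsymbol{b}_m\in\mathbb{R}^{k_m}$, and $\boldsymbol{a}\in\mathbb{R}^d$. Suppose for each $m$: (a) $\phi_m:\mathbb{R}^{k_m}\to I_m$ is convex and twice differentiable, where $I_m\subseteq\mathbb{R}$ is an interval; (b) $\rho_m:I_m\to[0,\infty)$ is differentiable and nondecreasing; (c) $\sigma_m=\nabla\phi_m$. Then, with $\boldsymbol{z}_m=\boldsymbol{W}_m\boldsymbol{x}+\boldsymbol{b}_m$, the function $$h(\boldsymbol{x})=\boldsymbol{a}+\sum_{m=1}^M\rho_m(\phi_m(\boldsymbol{z}_m))\,\boldsymbol{W}_m^\top\sigma_m(\boldsymbol{z}_m)$$ is the gradient of a convex continuously differentiable function on $\mathbb{R}^d$, i.e. an mGradNet.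
   Context: An mGradNet is a function $f:\mathbb{R}^d\to\mathbb{R}^d$ with $f=\nabla F$ for some convex continuously differentiable $F:\mathbb{R}^d\to\mathbb{R}$. *)

(* Defs.v *)
From HB Require Import structures.
From mathcomp Require Import all_boot all_order all_algebra.
From mathcomp Require Import all_classical all_reals all_analysis.
Set Implicit Arguments. Unset Strict Implicit. Unset Printing Implicit Defensive.
Import Order.TTheory GRing.Theory Num.Theory.
Import numFieldNormedType.Exports.
Local Open Scope classical_set_scope.
Local Open Scope ring_scope.

Definition dotv (R : realType) (n : nat) (u v : 'cV[R]_n) : R :=
  \sum_(i < n) u i 0 * v i 0.

Definition is_gradient (R : realType) (n : nat)
    (F : 'cV[R]_n -> R) (g : 'cV[R]_n -> 'cV[R]_n) : Prop :=
  forall x, differentiable F x /\ forall v, 'd F x v = dotv (g x) v.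

Definition convex_fun (R : realType) (n : nat) (F : 'cV[R]_n -> R) : Prop :=
  forall (x y : 'cV[R]_n) (t : R), 0 <= t -> t <= 1 ->
    F (t *: x + (1 - t) *: y) <= t * F x + (1 - t) * F y.

(* mGradNet: f = grad F with F convex and continuously differentiable;
   since F has gradient f, F is C^1 iff f is continuous. *)
Definition mGradNet (R : realType) (d : nat) (f : 'cV[R]_d -> 'cV[R]_d) : Prop :=
  exists F : 'cV[R]_d -> R, convex_fun F /\ is_gradient F f /\ continuous f.

(* rho : I -> R is differentiable on the interval I (one-sided derivative at
   endpoints belonging to I): for each x in I, the difference quotient has a
   limit as y -> x within I \ {x}. *)
Definition derivable_on_itv (R : realType) (I : interval R) (rho : R -> R) : Prop :=
  forall x, x \in I -> exists l : R,
    (fun y => (rho y - rho x) / (y - x)) @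
      (within (fun y => y \in I /\ y != x) (nbhs x)) --> l.

(* Main.v *)
Require Import Defs.
From HB Require Import structures.
From mathcomp Require Import all_boot all_order all_algebra.
From mathcomp Require Import all_classical all_reals all_analysis.
From mathcomp Require Import ring lra.
Import Order.TTheory GRing.Theory Num.Theory.
Import numFieldNormedType.Exports.
Set Implicit Arguments. Unset Strict Implicit.
Local Open Scope classical_set_scope.
Local Open Scope ring_scope.

Lemma rho_within (R : realType) (I : interval R) (rho : R -> R) :
  derivable_on_itv I rho -> forall s, s \in I ->
  rho y @[y --> within [set` I] (nbhs s)] --> rho s.
Proof.
move=> hd s sI; have [l hl] := hd s sI.
apply/cvgrPdist_lt => e e0.
have K0 : 0 < `|l| + 1 by rewrite ltr_wpDl.
have /cvgrPdist_lt /(_ 1 ltr01) := hl.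
rewrite near_withinE => H1.
have H2 : \forall y \near s, `|s - y| < e / (`|l| + 1).
  apply/nbhs_normP; exists (e / (`|l| + 1)).
    by rewrite /= divr_gt0.
  by move=> y.
rewrite near_withinE; apply: filterS2 H1 H2 => y h1 h2 Iy.
have [->|ys] := eqVneq y s; first by rewrite subrr normr0.
have := h1 (conj Iy ys) => {}h1.
set q := (rho y - rho s) / (y - s) in h1.
have ys0 : y - s != 0 by rewrite subr_eq0.
have -> : rho s - rho y = q * (s - y).
  by rewrite /q -(opprB y s) mulrN divfK // opprB.
rewrite normrM.
have hq : `|q| < `|l| + 1.
  have : `|q| <= `|l| + `|l - q|.
    apply: (le_trans _ (ler_normB l (l - q))); by rewrite opprB addrC subrK.
  move/le_lt_trans; apply; by rewrite ltrD2l.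
have H := ltr_pM (normr_ge0 q) (normr_ge0 _) hq h2.
by rewrite mulrCA mulfV ?gt_eqF// mulr1 in H.
Qed.

Lemma itv_sub (R : realType) (I : interval R) a b :
  a \in I -> b \in I -> `[a, b] `<=` [set` I].
Proof.
move=> aI bI x /=; rewrite in_itv /= => /andP[ax xb].
by apply: (interval_is_interval aI bI); rewrite ax xb.
Qed.

Lemma mu_itvcc (R : realType) (a b : R) : a <= b ->
  fine (lebesgue_measure (`[a, b] : set R)) = b - a.
Proof.
move=> ab; rewrite lebesgue_measure_itv /= lte_fin.
have [ab'|] := ltP a b; first by [].
move=> ba; have -> : a = b by apply/le_anti; rewrite ab ba.
by rewrite subrr.
Qed.

Definition J (R : realType) (rho : R -> R) (a b : R) :=
  \int[lebesgue_measure]_(x in `[a, b]) rho x.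

Lemma rho_int (R : realType) (I : interval R) (rho : R -> R) a b :
  derivable_on_itv I rho -> a \in I -> b \in I ->
  lebesgue_measure.-integrable `[a, b] (EFin \o rho).
Proof.
move=> hd aI bI; apply: continuous_compact_integrable; first exact: segment_compact.
have H : {within [set` I], continuous rho}.
  by apply/subspace_continuousP => x Ix; exact: rho_within hd x Ix.
exact: (continuous_subspaceW (itv_sub aI bI) H).
Qed.

Lemma cst_int (R : realType) (a b c : R) :
  lebesgue_measure.-integrable `[a, b] (EFin \o (fun _ : R => c)).
Proof.
apply: continuous_compact_integrable; first exact: segment_compact.
exact/continuous_subspaceT/cst_continuous.
Qed.

Lemma J_bounds (R : realType) (I : interval R) (rho : R -> R) a b :
  derivable_on_itv I rho ->
  (forall x y, x \in I -> y \in I -> x <= y -> rho x <= rho y) ->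
  a <= b -> a \in I -> b \in I ->
  rho a * (b - a) <= J rho a b /\ J rho a b <= rho b * (b - a).
Proof.
move=> hd hm ab aI bI; rewrite -(mu_itvcc ab) -!Rintegral_cst; try exact: measurable_itv.
split; apply: le_Rintegral; try exact: measurable_itv;
  try exact: cst_int; try exact: (rho_int hd aI bI).
- move=> x xab; have xI := itv_sub aI bI xab.
  by move: xab; rewrite /= in_itv /= => /andP[ax _]; apply: hm.
- move=> x xab; have xI := itv_sub aI bI xab.
  by move: xab; rewrite /= in_itv /= => /andP[_ xb]; apply: hm.
Qed.

Lemma J_chasles (R : realType) (I : interval R) (rho : R -> R) a x b :
  derivable_on_itv I rho ->
  a <= x -> x <= b -> a \in I -> b \in I ->
  J rho a b = J rho a x + J rho x b.
Proof.
move=> hd ax xb aI bI.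
have iab := rho_int hd aI bI.
have := @Rintegral_itvB R rho (BLeft a) (BRight b) x iab.
rewrite !bnd_simp => /(_ ax xb) H.
rewrite /J -(@Rintegral_itv_obnd_cbnd R x (BRight b) rho); last first.
  apply: integrableS iab => //; try exact: measurable_itv.
  by apply: subset_itvr; rewrite bnd_simp.
by rewrite -H addrC subrK.
Qed.

Lemma J_aa (R : realType) (rho : R -> R) a : J rho a a = 0.
Proof. by rewrite /J set_itv1 Rintegral_set1. Qed.

Definition K (R : realType) (rho : R -> R) (a b : R) :=
  if a <= b then J rho a b else - J rho b a.

Lemma K_le (R : realType) (rho : R -> R) a b : a <= b -> K rho a b = J rho a b.
Proof. by rewrite /K => ->. Qed.

Lemma K_ge (R : realType) (rho : R -> R) a b : b <= a -> K rho a b = - J rho b a.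
Proof.
rewrite /K => ba; case: ifP => // ab.
have -> : a = b by apply/le_anti; rewrite ab ba.
by rewrite J_aa oppr0.
Qed.

Lemma K_chasles (R : realType) (I : interval R) (rho : R -> R) a x b :
  derivable_on_itv I rho -> a \in I -> x \in I -> b \in I ->
  K rho a x + K rho x b = K rho a b.
Proof.
move=> hd aI xI bI.
case/orP: (le_total a x) => ax; case/orP: (le_total x b) => xb.
- by rewrite (K_le rho ax) (K_le rho xb) (K_le rho (le_trans ax xb)) (J_chasles hd ax xb aI bI).
- case/orP: (le_total a b) => ab.
  + rewrite (K_le rho ax) (K_ge rho xb) (K_le rho ab) (J_chasles hd ab xb aI xI).
    lra.
  + rewrite (K_le rho ax) (K_ge rho xb) (K_ge rho ab) (J_chasles hd ab ax bI xI).
    lra.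
- case/orP: (le_total a b) => ab.
  + rewrite (K_ge rho ax) (K_le rho xb) (K_le rho ab) (J_chasles hd ax ab xI bI).
    lra.
  + rewrite (K_ge rho ax) (K_le rho xb) (K_ge rho ab) (J_chasles hd xb ab xI aI).
    lra.
- rewrite (K_ge rho ax) (K_ge rho xb) (K_ge rho (le_trans xb ax)).
  rewrite (J_chasles hd xb ax bI aI); lra.
Qed.

Lemma K_P (R : realType) (I : interval R) (rho : R -> R) c u s :
  derivable_on_itv I rho ->
  (forall x y, x \in I -> y \in I -> x <= y -> rho x <= rho y) ->
  c \in I -> u \in I -> s \in I ->
  rho s * (u - s) <= K rho c u - K rho c s <= rho u * (u - s).
Proof.
move=> hd hm cI uI sI.
have -> : K rho c u - K rho c s = K rho s u.
  by rewrite -(K_chasles hd cI sI uI) addrC addKr.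
case/orP: (le_total s u) => su.
  have [h1 h2] := J_bounds hd hm su sI uI.
  by rewrite (K_le rho su) h1 h2.
have [h1 h2] := J_bounds hd hm su uI sI.
rewrite (K_ge rho su) -(opprB s u) !mulrN !lerN2.
by rewrite h1 h2.
Qed.

Lemma rho_ed (R : realType) (I : interval R) (rho : R -> R) s :
  derivable_on_itv I rho -> s \in I -> forall e, 0 < e ->
  exists2 d, 0 < d & forall y, y \in I -> `|s - y| < d -> `|rho s - rho y| < e.
Proof.
move=> hd sI e e0.
have /cvgrPdist_lt /(_ e e0) := rho_within hd sI.
rewrite near_withinE => /nbhs_normP [d d0 H].
by exists d => // y yI sy; apply: (H y sy).
Qed.

Lemma conv_in (R : realType) (I : interval R) (x y t : R) :
  x \in I -> y \in I -> 0 <= t -> t <= 1 -> t * x + (1 - t) * y \in I.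
Proof.
move=> xI yI t0 t1.
case/orP: (le_total x y) => xy.
  apply: (interval_is_interval xI yI).
  have h1 : 0 <= t * (y - x) by rewrite mulr_ge0 // subr_ge0.
  have h2 : 0 <= (1 - t) * (y - x) by rewrite mulr_ge0 // subr_ge0.
  apply/andP; split; nra.
apply: (interval_is_interval yI xI).
have h1 : 0 <= t * (x - y) by rewrite mulr_ge0 // subr_ge0.
have h2 : 0 <= (1 - t) * (x - y) by rewrite mulr_ge0 // subr_ge0.
apply/andP; split; nra.
Qed.

Lemma K_mono (R : realType) (I : interval R) (rho : R -> R) c u v :
  derivable_on_itv I rho ->
  (forall x y, x \in I -> y \in I -> x <= y -> rho x <= rho y) ->
  (forall x, x \in I -> 0 <= rho x) ->
  c \in I -> u \in I -> v \in I -> u <= v -> K rho c u <= K rho c v.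
Proof.
move=> hd hm hp cI uI vI uv.
have /andP[h _] := K_P hd hm cI vI uI.
rewrite -subr_ge0; apply: le_trans h.
by rewrite mulr_ge0 ?hp // subr_ge0.
Qed.

Lemma K_conv (R : realType) (I : interval R) (rho : R -> R) c u v t :
  derivable_on_itv I rho ->
  (forall x y, x \in I -> y \in I -> x <= y -> rho x <= rho y) ->
  c \in I -> u \in I -> v \in I -> 0 <= t -> t <= 1 ->
  K rho c (t * u + (1 - t) * v) <= t * K rho c u + (1 - t) * K rho c v.
Proof.
move=> hd hm cI uI vI t0 t1.
set w := t * u + (1 - t) * v.
have wI : w \in I by apply: conv_in.
have /andP[h1 _] := K_P hd hm cI uI wI.
have /andP[h2 _] := K_P hd hm cI vI wI.
have H1 : 0 <= t * (K rho c u - K rho c w - rho w * (u - w)).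
  by rewrite mulr_ge0 // subr_ge0.
have H2 : 0 <= (1 - t) * (K rho c v - K rho c w - rho w * (v - w)).
  by rewrite mulr_ge0 // ?subr_ge0.
have E : t * (K rho c u - K rho c w - rho w * (u - w)) +
  (1 - t) * (K rho c v - K rho c w - rho w * (v - w)) =
  t * K rho c u + (1 - t) * K rho c v - K rho c w.
  by rewrite /w; ring.
by have := addr_ge0 H1 H2; rewrite E subr_ge0.
Qed.

Definition Rt (R : realType) (I : interval R) (rho : R -> R) c s u :=
  if u \in I then K rho c u else K rho c s + rho s * (u - s).

Lemma Rt_cvg (R : realType) (I : interval R) (rho : R -> R) c s :
  derivable_on_itv I rho ->
  (forall x y, x \in I -> y \in I -> x <= y -> rho x <= rho y) ->
  c \in I -> s \in I ->
  h^-1 *: ((Rt I rho c s \o shift s) (h *: 1) - Rt I rho c s s) @[h --> 0^'] --> rho s.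
Proof.
move=> hd hm cI sI.
apply/cvgrPdist_lt => e e0; have [d d0 Hd] := rho_ed hd sI e0.
rewrite near_withinE; apply/nbhs_normP; exists d => //= h.
rewrite /ball_ /= sub0r normrN => hlt hnz.
rewrite -[h%:A]/(h * 1) mulr1 -[_^-1 *: _]/(_ * _) {2}/Rt sI /Rt.
case: ifP => uI; last first.
  by rewrite addrK addrAC subrr add0r mulrC mulfK // subrr normr0.
have /andP[h1 h2] := K_P hd hm cI uI sI.
rewrite addrK in h1 h2.
set D := K rho c (h + s) - K rho c s in h1 h2 *.
have E : rho s - h^-1 * D = h^-1 * - (D - rho s * h).
  by field.
rewrite E normrM normrN.
have H3 : `|D - rho s * h| <= `|(rho (h + s) - rho s) * h|.
  have g0 : 0 <= D - rho s * h by rewrite subr_ge0.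
  have g1 : D - rho s * h <= (rho (h + s) - rho s) * h by rewrite mulrBl lerD2r.
  by rewrite !ger0_norm // (le_trans g0 g1).
rewrite normrM in H3; rewrite normfV.
have hi : 0 <= `|h|^-1 by rewrite invr_ge0.
apply: (le_lt_trans (ler_wpM2l hi H3)).
rewrite mulrCA mulVf ?normr_eq0 // mulr1 distrC.
by apply: Hd => //; rewrite opprD addrCA subrr addr0 normrN.
Qed.

Lemma Rt_diff (R : realType) (I : interval R) (rho : R -> R) c s :
  derivable_on_itv I rho ->
  (forall x y, x \in I -> y \in I -> x <= y -> rho x <= rho y) ->
  c \in I -> s \in I ->
  differentiable (Rt I rho c s) s /\
  'd (Rt I rho c s) s = (fun h => h * rho s) :> (R -> R).
Proof.
move=> hd hm cI sI; have hc := Rt_cvg hd hm cI sI.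
have dv : derivable (Rt I rho c s) s 1 by exact: cvgP hc.
have df : differentiable (Rt I rho c s) s by apply/derivable1_diffP.
split => //; rewrite diff1E // derive1E /derive (cvg_lim _ hc) //.
Qed.

Lemma dotv_mx (R : realType) n (u v : 'cV[R]_n) : dotv u v = (u^T *m v) 0 0.
Proof. by rewrite /dotv mxE; apply: eq_bigr => i _; rewrite mxE. Qed.

Lemma dotvDl (R : realType) n (u w v : 'cV[R]_n) : dotv (u + w) v = dotv u v + dotv w v.
Proof. by rewrite !dotv_mx linearD /= mulmxDl mxE. Qed.

Lemma dotvZl (R : realType) n k (u v : 'cV[R]_n) : dotv (k *: u) v = k * dotv u v.
Proof. by rewrite !dotv_mx linearZ /= -scalemxAl mxE. Qed.

Lemma dotvDr (R : realType) n (u w v : 'cV[R]_n) : dotv v (u + w) = dotv v u + dotv v w.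
Proof. by rewrite !dotv_mx mulmxDr mxE. Qed.

Lemma dotvZr (R : realType) n k (u v : 'cV[R]_n) : dotv v (k *: u) = k * dotv v u.
Proof. by rewrite !dotv_mx -scalemxAr mxE. Qed.

Lemma dotv_suml (R : realType) n m (u : 'I_m -> 'cV[R]_n) v :
  dotv (\sum_(i < m) u i) v = \sum_(i < m) dotv (u i) v.
Proof.
elim/big_ind2: _ => //; last by move=> *; rewrite dotvDl; congr (_ + _).
by rewrite /dotv big1 // => i _; rewrite mxE mul0r.
Qed.

Lemma dotv_tr (R : realType) k n (W : 'M[R]_(k, n)) y v :
  dotv (W^T *m y) v = dotv y (W *m v).
Proof. by rewrite !dotv_mx trmx_mul trmxK mulmxA. Qed.

Lemma cont_sum (R : realType) (T : topologicalType) (V : normedModType R) n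
  (f : 'I_n -> T -> V) :
  (forall i, continuous (f i)) -> continuous (fun x => \sum_(i < n) f i x).
Proof.
move=> fc; rewrite -fct_sumE.
elim/big_ind: _ => //.
- by move=> x; exact: cst_continuous.
- by move=> g h gc hc x; exact: (continuousD (gc x) (hc x)).
Qed.

Lemma mulmx_cont (R : realType) k n (W : 'M[R]_(k, n)) :
  continuous (fun x : 'cV[R]_n => W *m x).
Proof.
have -> : (fun x : 'cV[R]_n => W *m x) = (fun x => \sum_(j < n) x j 0 *: col j W).
  apply: boolp.funext => x; apply/matrixP => i l; rewrite summxE !mxE.
  by apply: eq_bigr => j _; rewrite !mxE mulrC ord1.
apply: cont_sum => j x; apply: continuousZr_tmp.
exact: coord_continuous.
Qed.

Lemma lin_diff (R : realType) (V W : normedModType R) (f : V -> W) x :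
  linear f -> continuous f -> differentiable f x /\ 'd f x = f :> (V -> W).
Proof.
move=> fl fc.
pose fM := GRing.isLinear.Build _ _ _ _ f fl.
pose fL : {linear V -> W} := HB.pack f fM.
split; first exact: (linear_differentiable (f := fL)).
exact: (diff_lin (f := fL)).
Qed.

Lemma diff_bigsum (R : realType) (V W : normedModType R) n (f : 'I_n -> V -> W) x :
  (forall i, differentiable (f i) x) ->
  differentiable (\sum_(i < n) f i) x /\
  'd (\sum_(i < n) f i) x = \sum_(i < n) ('d (f i) x : V -> W) :> (V -> W).
Proof.
move=> df; elim/big_ind2: _ => //.
- by split; [exact: differentiable_cst | exact: diff_cst].
- move=> f1 g1 f2 g2 [d1 e1] [d2 e2]; split; first exact: differentiableD.
  by rewrite diffD // e1 e2.
Qed.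


Lemma aff_diff (R : realType) k n (W : 'M[R]_(k, n)) (b : 'cV[R]_k) x :
  differentiable (fun x => W *m x + b) x /\
  'd (fun x => W *m x + b) x = (fun v => W *m v) :> ('cV[R]_n -> 'cV[R]_k).
Proof.
have hl : linear (fun x : 'cV[R]_n => W *m x).
  by move=> a u w; rewrite mulmxDr scalemxAr.
have [d1 e1] := lin_diff x hl (@mulmx_cont R k n W).
have d2 : differentiable (cst b : 'cV[R]_n -> 'cV[R]_k) x by exact: differentiable_cst.
have E : (fun x => W *m x + b) = (fun x => W *m x) + cst b by apply: boolp.funext.
have d3 := differentiableD d1 d2.
have e3 := diffD d1 d2.
rewrite E; split; first exact d3.
etransitivity; first exact e3.
apply: boolp.funext => v /=; rewrite -[RHS]addr0; congr (_ + _).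
  exact: (congr1 (fun f => f v) e1).
exact: (congr1 (fun f => f v) (diff_cst b x)).
Qed.

Lemma aff_cont (R : realType) k n (W : 'M[R]_(k, n)) (b : 'cV[R]_k) :
  continuous (fun x => W *m x + b).
Proof.
move=> x; apply: (continuousD (f := fun x : 'cV[R]_n => W *m x) (g := cst b)).
  exact: mulmx_cont.
exact: cst_continuous.
Qed.


Lemma G_grad (R : realType) k n (W : 'M[R]_(k, n)) (b : 'cV[R]_k) (I : interval R)
  (phi : 'cV[R]_k -> R) (sigma : 'cV[R]_k -> 'cV[R]_k) (rho : R -> R) c x :
  derivable_on_itv I rho ->
  (forall x y, x \in I -> y \in I -> x <= y -> rho x <= rho y) ->
  c \in I -> (forall z, phi z \in I) -> is_gradient phi sigma ->
  differentiable (fun x => K rho c (phi (W *m x + b))) x /\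
  forall v, 'd (fun x => K rho c (phi (W *m x + b))) x v =
    rho (phi (W *m x + b)) * dotv (sigma (W *m x + b)) (W *m v).
Proof.
move=> hd hm cI phiI hg.
set z := W *m x + b; set s := phi z.
have sI : s \in I by exact: phiI.
have [dR eR] := Rt_diff hd hm cI sI.
have [dA eA] := aff_diff W b x.
have [dphi ephi] := hg z.
have E : (fun x => K rho c (phi (W *m x + b))) =
    Rt I rho c s \o (phi \o (fun x => W *m x + b)).
  by apply: boolp.funext => y; rewrite /= /Rt phiI.
have d1 : differentiable (phi \o (fun x => W *m x + b)) x.
  exact: differentiable_comp.
have e1 := diff_comp dA dphi.
have d2 : differentiable (Rt I rho c s \o (phi \o (fun x => W *m x + b))) x.
  exact: differentiable_comp.
have e2 := diff_comp d1 dR.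
rewrite E; split => // v.
transitivity ('d (Rt I rho c s) s ('d (phi \o (fun x => W *m x + b)) x v)).
  exact: (congr1 (fun f => f v) e2).
transitivity ('d (Rt I rho c s) s ('d phi z ('d (fun x => W *m x + b) x v))).
  congr ('d (Rt I rho c s) s _); exact: (congr1 (fun f => f v) e1).
transitivity ('d (Rt I rho c s) s ('d phi z (W *m v))).
  congr ('d (Rt I rho c s) s ('d phi z _)); exact: (congr1 (fun f => f v) eA).
transitivity ('d (Rt I rho c s) s (dotv (sigma z) (W *m v))).
  congr ('d (Rt I rho c s) s _); exact: ephi.
transitivity (dotv (sigma z) (W *m v) * rho s).
  exact: (congr1 (fun f => f (dotv (sigma z) (W *m v))) eR).
by rewrite mulrC.
Qed.

Lemma aff_comb (R : realType) k n (W : 'M[R]_(k, n)) (b : 'cV[R]_k) x y t :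
  W *m (t *: x + (1 - t) *: y) + b = t *: (W *m x + b) + (1 - t) *: (W *m y + b).
Proof.
rewrite mulmxDr -!scalemxAr !scalerDr.
have hb : b = t *: b + (1 - t) *: b by rewrite -scalerDl addrC subrK scale1r.
by rewrite {1}hb addrACA.
Qed.

Lemma G_conv (R : realType) k n (W : 'M[R]_(k, n)) (b : 'cV[R]_k) (I : interval R)
  (phi : 'cV[R]_k -> R) (rho : R -> R) c :
  derivable_on_itv I rho ->
  (forall x y, x \in I -> y \in I -> x <= y -> rho x <= rho y) ->
  (forall x, x \in I -> 0 <= rho x) ->
  c \in I -> (forall z, phi z \in I) -> convex_fun phi ->
  convex_fun (fun x => K rho c (phi (W *m x + b))).
Proof.
move=> hd hm hp cI phiI cphi x y t t0 t1 /=.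
rewrite aff_comb.
apply: le_trans (K_conv hd hm cI (phiI _) (phiI _) t0 t1).
apply: (K_mono hd hm hp cI (phiI _)); first exact: conv_in.
exact: cphi.
Qed.

Lemma term_cont (R : realType) k n (W : 'M[R]_(k, n)) (b : 'cV[R]_k) (I : interval R)
  (phi : 'cV[R]_k -> R) (sigma : 'cV[R]_k -> 'cV[R]_k) (rho : R -> R) :
  derivable_on_itv I rho ->
  (forall z, phi z \in I) -> is_gradient phi sigma ->
  (forall z, differentiable sigma z) ->
  continuous (fun x => rho (phi (W *m x + b)) *: (W^T *m sigma (W *m x + b))).
Proof.
move=> hd phiI hg hs x.
set s := phi (W *m x + b).
have sI : s \in I by exact: phiI.
pose rt := fun u => if u \in I then rho u else rho s.
have E : (fun x => rho (phi (W *m x + b)) *: (W^T *m sigma (W *m x + b))) =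
  (fun x => rt (phi (W *m x + b)) *: (W^T *m sigma (W *m x + b))).
  by apply: boolp.funext => y; rewrite /rt phiI.
rewrite E.
have cA : continuous (fun x : 'cV[R]_n => W *m x + b) by exact: aff_cont.
have cphi : continuous phi by move=> z; apply: differentiable_continuous; case: (hg z).
have csig : continuous sigma by move=> z; apply: differentiable_continuous.
have crt : {for s, continuous rt}.
  apply/cvgrPdist_lt => e e0; have [d d0 Hd] := rho_ed hd sI e0.
  apply/nbhs_normP; exists d => //= u; rewrite /ball_ /= => su.
  rewrite /rt sI; case: ifP => uI; last by rewrite subrr normr0.
  exact: Hd.
apply: (continuousZ (s := fun x => rt (phi (W *m x + b)))
  (f := fun x => W^T *m sigma (W *m x + b))).
  apply: (continuous_comp (f := fun x => phi (W *m x + b)) (g := rt)).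
    by apply: (continuous_comp (f := fun x => W *m x + b) (g := phi)); [apply: cA|apply: cphi].
  exact: crt.
apply: (continuous_comp (f := fun x => sigma (W *m x + b)) (g := fun y => W^T *m y)).
  by apply: (continuous_comp (f := fun x => W *m x + b) (g := sigma)); [apply: cA|apply: csig].
exact: mulmx_cont.
Qed.

Unset Implicit Arguments. Set Strict Implicit.


Theorem corollary3 (R : realType) (d M : nat) (k : 'I_M -> nat)
    (W : forall m : 'I_M, 'M[R]_(k m, d))
    (b : forall m : 'I_M, 'cV[R]_(k m))
    (a : 'cV[R]_d)
    (I : 'I_M -> interval R)
    (phi : forall m : 'I_M, 'cV[R]_(k m) -> R)
    (sigma : forall m : 'I_M, 'cV[R]_(k m) -> 'cV[R]_(k m))
    (rho : 'I_M -> R -> R) :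
  (0 < M)%N ->
  (forall m z, phi m z \in I m) ->
  (forall m, convex_fun (phi m)) ->
  (forall m, is_gradient (phi m) (sigma m)) ->
  (forall m z, differentiable (sigma m) z) ->
  (forall m, derivable_on_itv (I m) (rho m)) ->
  (forall m x, x \in I m -> 0 <= rho m x) ->
  (forall m x y, x \in I m -> y \in I m -> x <= y -> rho m x <= rho m y) ->
  mGradNet (fun x : 'cV[R]_d =>
    a + \sum_(m < M)
          rho m (phi m (W m *m x + b m)) *: ((W m)^T *m sigma m (W m *m x + b m))).
Proof.
move=> _ phiI cphi hg hs hd hp hm.
pose c m := phi m 0.
have cI m : c m \in I m := phiI m 0.
pose G m x := K (rho m) (c m) (phi m (W m *m x + b m)).
pose F x := dotv a x + \sum_(m < M) G m x.
exists F; split; [|split].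
- move=> x y t t0 t1; rewrite /F.
  have HS : \sum_(m < M) G m (t *: x + (1 - t) *: y) <=
      t * \sum_(m < M) G m x + (1 - t) * \sum_(m < M) G m y.
    rewrite !mulr_sumr -big_split /=; apply: ler_sum => m _.
    exact: (G_conv (W m) (b m) (hd m) (hm m) (hp m) (cI m) (phiI m) (cphi m)).
  rewrite dotvDr !dotvZr; lra.
- move=> x.
  have dG m := G_grad (W m) (b m) (sigma := sigma m) x (hd m) (hm m) (cI m) (phiI m) (hg m).
  have hl : linear (dotv a) by move=> r u w; rewrite dotvDr dotvZr.
  have cl : continuous (dotv a).
    have -> : dotv a = (fun M => M 0 0) \o (fun x => a^T *m x).
      by apply: boolp.funext => y; rewrite /= dotv_mx.
    move=> y; apply: (continuous_comp (f := fun x : 'cV[R]_d => a^T *m x)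
      (g := fun M : 'M[R]_(1, 1) => M 0 0)); first exact: mulmx_cont.
    exact: coord_continuous.
  have [dl el] := lin_diff x hl cl.
  have [ds es] := diff_bigsum (f := G) (x := x) (fun m => (dG m).1).
  have EF : F = dotv a + \sum_(m < M) G m.
    by apply: boolp.funext => y; rewrite /F /= fct_sumE.
  rewrite EF; split; first exact: differentiableD.
  move=> v.
  transitivity ('d (dotv a) x v + 'd (\sum_(m < M) G m) x v).
    exact: (congr1 (fun f => f v) (diffD dl ds)).
  transitivity (dotv a v + \sum_(m < M) 'd (G m) x v).
    congr (_ + _); first exact: (congr1 (fun f => f v) el).
    transitivity ((\sum_(m < M) ('d (G m) x : _ -> _)) v).
      exact: (congr1 (fun f => f v) es).
    by rewrite fct_sumE.
  transitivity (dotv a v + \sum_(m < M)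
     rho m (phi m (W m *m x + b m)) * dotv (sigma m (W m *m x + b m)) (W m *m v)).
    by congr (_ + _); apply: eq_bigr => m _; exact: ((dG m).2 v).
  rewrite dotvDl dotv_suml; congr (_ + _); apply: eq_bigr => m _.
  by rewrite dotvZl dotv_tr.
- move=> x.
  apply: (continuousD (f := cst a)); first exact: cst_continuous.
  apply: cont_sum => m.
  exact: (term_cont (hd m) (phiI m) (hg m) (hs m)).
Qed.
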